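(* Let $H=(V,E)$ be a geometric hypergraph on points in the plane, i.e., $V$ is a finite set of points in $\mathbb{R}^2$ and $E$ is a family of subsets of $V$, where every edge $A\in E$ has $|A|\ge 2$. Then $H$ admits a separating cycle if and only if $H$ is $2$-colorable.
   Context: A hypergraph $H=(V,E)$ is $2$-colorable if there is a coloring of $V$ with two colors such that no edge $A\in E$ is monochromatic. For a simple closed polygonal curve $C$ in the plane, let $\mathring{C}$, $\partial C$, $\overline{C}$ denote its interior, boundary and exterior. A polygonal cycle $C$ is a separating cycle for $H$ if (i) $C$ is simple (no self-intersections) and (ii) for each edge $A\in E$, both $A\cap(\mathring{C}\cup\partial C)$ and $A\cap\overline{C}$ are nonempty. *)

(* Defs.v *)
From HB Require Import structures.
From mathcomp Require Import all_boot all_order all_algebra.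
From mathcomp Require Import all_classical all_reals all_analysis.
Import numFieldNormedType.Exports.
Set Implicit Arguments. Unset Strict Implicit. Unset Printing Implicit Defensive.
Import Order.TTheory GRing.Theory Num.Theory.
Local Open Scope classical_set_scope.
Local Open Scope ring_scope.

Section Plane.
Variable R : realType.
Notation point := (R * R)%type.

Definition segment (p q : point) : set point :=
  [set x | exists t : R, 0 <= t /\ t <= 1 /\
     x = ((1 - t) * p.1 + t * q.1, (1 - t) * p.2 + t * q.2)].

(* A polygonal cycle is given by its list of vertices p_0, ..., p_{k-1};
   its sides are [p_i, p_{i+1 mod k}]. *)
Definition side (ps : seq point) (i : nat) : set point :=
  segment (nth (0,0) ps i) (nth (0,0) ps ((i.+1) %% size ps)).

Definition pboundary (ps : seq point) : set point :=
  [set x | exists2 i, (i < size ps)%N & side ps i x].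

Definition simple_polygon (ps : seq point) : Prop :=
  (3 <= size ps)%N /\ uniq ps /\
  forall i j, (i < j)%N -> (j < size ps)%N ->
    if j == i.+1 then side ps i `&` side ps j = [set nth (0,0) ps j]
    else if (i == 0%N) && (j == (size ps).-1) then
      side ps i `&` side ps j = [set nth (0,0) ps i]
    else side ps i `&` side ps j = set0.

Definition bounded_set (S : set point) : Prop :=
  exists M : R, forall y, S y -> `|y.1| <= M /\ `|y.2| <= M.

(* exterior: the unbounded part of the complement of the boundary, i.e. the
   points lying in an unbounded connected subset of the complement *)
Definition pexterior (ps : seq point) : set point :=
  [set x | exists S : set point, S x /\ S `<=` ~` pboundary ps /\
     @connected (R * R)%type S /\ ~ bounded_set S].

Definition pinterior (ps : seq point) : set point :=
  ~` (pboundary ps `|` pexterior ps).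

Definition separating_cycle (E : seq (seq point)) (ps : seq point) : Prop :=
  simple_polygon ps /\
  forall A, A \in E ->
    (exists2 a, a \in A & (pinterior ps `|` pboundary ps) a) /\
    (exists2 a, a \in A & pexterior ps a).

Definition two_colorable (V : seq point) (E : seq (seq point)) : Prop :=
  exists c : point -> bool, forall A, A \in E ->
    exists x, exists y, [/\ x \in A, y \in A & c x != c y].

Definition geom_hypergraph (V : seq point) (E : seq (seq point)) : Prop :=
  uniq V /\ forall A, A \in E -> [/\ uniq A, {subset A <= V} & (2 <= size A)%N].
End Plane.

(* Main.v *)
Require Import Defs.
From mathcomp Require Import all_boot all_order all_algebra.
From mathcomp Require Import all_classical all_reals all_analysis.
From mathcomp Require Import ring lra zify.
Import numFieldNormedType.Exports.
Set Implicit Arguments. Unset Strict Implicit. Unset Printing Implicit Defensive.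
Import Order.TTheory GRing.Theory Num.Theory.
Local Open Scope classical_set_scope.
Local Open Scope ring_scope.

Section Geo.
Variable R : realType.
Local Notation point := (R * R)%type.
Variable lam : R.
Definition uu (p : point) := p.1 + lam * p.2.
Definition vv (p : point) := p.2.
Definition phi (a b : R) : point := (a - lam * b, b).

Lemma uu_phi a b : uu (phi a b) = a.
Proof. by rewrite /uu /phi /= subrK. Qed.
Lemma vv_phi a b : vv (phi a b) = b.
Proof. by []. Qed.

Lemma seg_a (a b : point) : segment a b a.
Proof. by exists 0; split=> //; split=> //; rewrite subr0 !mul1r !mul0r !addr0; case: a. Qed.
Lemma seg_b (a b : point) : segment a b b.
Proof. by exists 1; split=> //; split=> //; rewrite subrr !mul0r !mul1r !add0r; case: b. Qed.
Lemma seg_sym (a b x : point) : segment a b x -> segment b a x.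
Proof.
case=> t [t0 [t1 ->]]; exists (1 - t); split; first lra; split; first lra.
congr pair; ring.
Qed.

Lemma seg_uv (a b x : point) : segment a b x -> exists t, [/\ 0 <= t, t <= 1,
  uu x = (1 - t) * uu a + t * uu b & vv x = (1 - t) * vv a + t * vv b].
Proof. case=> t [t0 [t1 ->]]; exists t; split => //; rewrite /uu /vv /=; ring. Qed.

Lemma seg_ubnd (a b x : point) : segment a b x -> uu a <= uu b ->
  uu a <= uu x /\ uu x <= uu b.
Proof. move=> /seg_uv [t [t0 t1 -> _]] h; split; nra. Qed.

Lemma seg_vge M (a b x : point) : segment a b x -> M <= vv a -> M <= vv b -> M <= vv x.
Proof. move=> /seg_uv [t [t0 t1 _ ->]] h1 h2; nra. Qed.
Lemma seg_vle M (a b x : point) : segment a b x -> vv a <= M -> vv b <= M -> vv x <= M.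
Proof. move=> /seg_uv [t [t0 t1 _ ->]] h1 h2; nra. Qed.
Lemma seg_vert (a b x : point) : segment a b x -> uu a = uu b -> uu x = uu a.
Proof. move=> /seg_uv [t [t0 t1 -> _]] ->; ring. Qed.

Lemma seg_at_a (a b x : point) : segment a b x -> uu a < uu b -> uu x <= uu a -> x = a.
Proof.
move=> hs h1 h2; case: (hs) => t [t0 [t1 ex]].
have [t' [_ _ hu _]] := seg_uv hs.
have tz : t = 0.
  move: hs h2; rewrite ex => _; rewrite /uu /= => h2.
  move: h1; rewrite /uu => h1; nra.
by rewrite ex tz subr0 !mul1r !mul0r !addr0; case: (a).
Qed.

Lemma seg_at_b (a b x : point) : segment a b x -> uu a < uu b -> uu b <= uu x -> x = b.
Proof.
move=> hs h1 h2; case: (hs) => t [t0 [t1 ex]].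
have t1' : t = 1.
  move: h2; rewrite ex /uu /= => h2.
  move: h1; rewrite /uu => h1; nra.
by rewrite ex t1' subrr !mul0r !mul1r !add0r; case: (b).
Qed.

Lemma inter1 (A B : set point) p : A p -> B p -> (forall x, A x -> B x -> x = p) ->
  A `&` B = [set p].
Proof.
move=> ha hb h; apply/seteqP; split => x /=.
  by case=> hx1 hx2; exact: h.
by move=> ->.
Qed.
Lemma inter0 (A B : set point) : (forall x, A x -> B x -> False) -> A `&` B = set0.
Proof. by move=> h; apply/seteqP; split => x //= [] /h. Qed.

Definition poly_of (ch : seq point) (T : R) : seq point :=
  ch ++ [:: phi (uu (nth (0,0) ch (size ch).-1)) T; phi (uu (nth (0,0) ch 0)) T].

Section Poly.
Variables (ch : seq point) (M T : R).
Local Notation N := (size ch).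
Local Notation c k := (nth (0,0) ch k).
Local Notation TR := (phi (uu (nth (0,0) ch (size ch).-1)) T).
Local Notation TL := (phi (uu (nth (0,0) ch 0)) T).
Local Notation ps := (poly_of ch T).

Lemma size_poly : size ps = (N + 2)%N.
Proof. by rewrite size_cat /= addn2. Qed.
Lemma nth_poly_ch k : (k < N)%N -> nth (0,0) ps k = c k.
Proof. by move=> h; rewrite nth_cat h. Qed.
Lemma nth_poly_TR : nth (0,0) ps N = TR.
Proof. by rewrite nth_cat ltnn subnn. Qed.
Lemma nth_poly_TL : nth (0,0) ps N.+1 = TL.
Proof. by rewrite nth_cat ltnNge leqnSn /= subSnn. Qed.

Lemma side_chain k : (k.+1 < N)%N -> side ps k = segment (c k) (c k.+1).
Proof.
move=> h; rewrite /side size_poly modn_small; last lia.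
by rewrite !nth_poly_ch //; lia.
Qed.
Lemma side_last : (0 < N)%N -> side ps N.-1 = segment (c N.-1) TR.
Proof.
move=> h; rewrite /side size_poly prednK // modn_small; last lia.
by rewrite nth_poly_TR nth_poly_ch ?prednK //; lia.
Qed.
Lemma side_top : side ps N = segment TR TL.
Proof.
by rewrite /side size_poly modn_small ?nth_poly_TR ?nth_poly_TL //; lia.
Qed.
Lemma side_left : (0 < N)%N -> side ps N.+1 = segment TL (c 0).
Proof.
move=> h; rewrite /side size_poly.
have -> : (N.+2 %% (N + 2) = 0)%N by rewrite addn2 modnn.
by rewrite nth_poly_TL nth_poly_ch.
Qed.

Hypothesis N2 : (2 <= N)%N.
Hypothesis cinc : forall i j, (i < j)%N -> (j < N)%N -> uu (c i) < uu (c j).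
Hypothesis cv : forall k, (k < N)%N -> vv (c k) <= M.
Hypothesis MT : M < T.

Lemma cle i j : (i <= j)%N -> (j < N)%N -> uu (c i) <= uu (c j).
Proof.
rewrite leq_eqVlt => /orP[/eqP->|h] hj //; exact/ltW/cinc.
Qed.

Lemma chain_facts k x : (k.+1 < N)%N -> side ps k x ->
  [/\ uu (c k) <= uu x, uu x <= uu (c k.+1), vv x <= M,
      (uu x <= uu (c k) -> x = c k) & (uu (c k.+1) <= uu x -> x = c k.+1)].
Proof.
move=> hk; rewrite side_chain // => hs.
have hlt : uu (c k) < uu (c k.+1) by apply: cinc => //.
have [h1 h2] := seg_ubnd hs (ltW hlt).
split => //.
- by apply: seg_vle hs _ _; apply: cv; lia.
- by move=> h; apply: seg_at_a hs hlt h.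
- by move=> h; apply: seg_at_b hs hlt h.
Qed.

Lemma last_facts x : side ps N.-1 x ->
  uu x = uu (c N.-1) /\ (T <= vv x -> x = TR).
Proof.
rewrite side_last; last lia. move=> hs.
have hv : uu (c N.-1) = uu TR by rewrite uu_phi.
split.
- exact: seg_vert hs hv.
- move=> hT; case: (hs) => t [t0 [t1 ex]].
  have cvl : vv (c N.-1) <= M by apply: cv; lia.
  have ht : t = 1.
    have hp : 0 < T - vv (c N.-1).
    by rewrite subr_gt0; exact: le_lt_trans cvl MT.
    move: hT hp; rewrite ex /vv /= => hT hp. clear -hT hp t1 t0. nra.
  by rewrite ex ht subrr !mul0r !mul1r !add0r; case: (TR).
Qed.

Lemma top_facts x : side ps N x ->
  [/\ T <= vv x, uu (c 0) <= uu x & uu x <= uu (c N.-1)].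
Proof.
rewrite side_top => hs.
have h0 : uu (c 0) <= uu (c N.-1) by apply: cle; lia.
have := seg_ubnd (seg_sym hs); rewrite !uu_phi => /(_ h0) [h1 h2].
split => //.
by apply: seg_vge hs _ _; rewrite vv_phi.
Qed.

Lemma top_TR x : side ps N x -> uu (c N.-1) <= uu x -> x = TR.
Proof.
rewrite side_top => hs h.
have h0 : uu (c 0) < uu (c N.-1) by apply: cinc; lia.
apply: seg_at_b (seg_sym hs) _ _; rewrite !uu_phi //.
Qed.
Lemma top_TL x : side ps N x -> uu x <= uu (c 0) -> x = TL.
Proof.
rewrite side_top => hs h.
have h0 : uu (c 0) < uu (c N.-1) by apply: cinc; lia.
apply: seg_at_a (seg_sym hs) _ _; rewrite !uu_phi //.
Qed.

Lemma left_facts x : side ps N.+1 x ->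
  uu x = uu (c 0) /\ (T <= vv x -> x = TL).
Proof.
rewrite side_left; last lia. move=> hs.
have hv : uu TL = uu (c 0) by rewrite uu_phi.
split.
- by rewrite (seg_vert hs hv) uu_phi.
- move=> hT; case: (hs) => t [t0 [t1 ex]].
  have cvl : vv (c 0) <= M by apply: cv; lia.
  have ht : t = 0.
    have hp : 0 < T - vv (c 0) by rewrite subr_gt0; exact: le_lt_trans cvl MT.
    move: hT hp; rewrite ex /vv /= => hT hp. clear -hT hp t1 t0. nra.
  by rewrite ex ht subr0 !mul0r !mul1r !addr0; case: (TL).
Qed.

Lemma poly_simple : simple_polygon ps.
Proof.
have N0 : (0 < N)%N by lia.
split; first by rewrite size_poly; lia.
split.
  rewrite cat_uniq; apply/and3P; split.
  - apply/(uniqP (0,0)) => i j; rewrite !inE => hi hj he.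
    case: (ltngtP i j) => // h; exfalso.
    + by have := cinc h hj; rewrite he ltxx.
    + by have := cinc h hi; rewrite he ltxx.
  - rewrite /= orbF negb_or; apply/andP; split; apply/negP => /(nthP (0,0)) [k hk he].
    + by have := cv hk; rewrite he vv_phi => h; move: (lt_le_trans MT h); rewrite ltxx.
    + by have := cv hk; rewrite he vv_phi => h; move: (lt_le_trans MT h); rewrite ltxx.
  - rewrite /= andbT inE; apply/negP => /eqP he.
    have := congr1 uu he; rewrite !uu_phi => e.
    have : (0 < N.-1)%N by lia.
    by move=> /cinc /(_ (ltac:(lia))); rewrite e ltxx.
move=> i j hij; rewrite size_poly => hj.
case: ifP => [/eqP ji|hji].
  subst j.
  have : (i.+2 < N \/ i.+2 = N \/ i.+1 = N \/ i = N)%N by lia.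
  case=> [hi|[hi|[hi|hi]]].
  - apply: inter1.
    + rewrite nth_poly_ch; last lia. rewrite side_chain; last lia. exact: seg_b.
    + rewrite nth_poly_ch; last lia. rewrite side_chain; last lia. exact: seg_a.
    + move=> x h1 h2; have [_ u1 _ _ eb] := chain_facts (k:=i) (ltac:(lia)) h1.
      have [u2 _ _ _ _] := chain_facts (k:=i.+1) (ltac:(lia)) h2.
      rewrite nth_poly_ch; last lia. apply: eb; lia.
  - have e : N.-1 = i.+1 by lia.
    apply: inter1.
    + rewrite nth_poly_ch; last lia. rewrite side_chain; last lia. exact: seg_b.
    + rewrite nth_poly_ch; last lia. rewrite -e side_last; last lia. exact: seg_a.
    + move=> x h1; rewrite -e => h2; have [_ u1 _ _ eb] := chain_facts (k:=i) (ltac:(lia)) h1.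
      have [u2 _] := last_facts h2.
      rewrite nth_poly_ch; last lia. rewrite e; apply: eb; by rewrite u2 e.
  - have e : i = N.-1 by lia.
    rewrite hi e; apply: inter1.
    + by rewrite nth_poly_TR side_last //; exact: seg_b.
    + by rewrite nth_poly_TR side_top //; exact: seg_a.
    + move=> x h1 h2; have [_ hx] := last_facts h1.
      have [hv _ _] := top_facts h2.
      by rewrite nth_poly_TR hx.
  - rewrite hi; apply: inter1.
    + by rewrite nth_poly_TL side_top //; exact: seg_b.
    + by rewrite nth_poly_TL side_left //; exact: seg_a.
    + move=> x h1 h2; have [_ hx] := left_facts h2.
      have [hv _ _] := top_facts h1.
      by rewrite nth_poly_TL hx.
case: ifP => [/andP[/eqP i0 /eqP jl]|hij2].
  have e : j = N.+1 by rewrite jl; lia.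
  subst i; rewrite e; apply: inter1.
  - rewrite nth_poly_ch; last lia. rewrite side_chain; last lia. exact: seg_a.
  - rewrite nth_poly_ch; last lia. rewrite side_left; last lia. exact: seg_b.
  - move=> x h1 h2; have [_ _ _ ea _] := chain_facts (k:=0) (ltac:(lia)) h1.
    have [u2 _] := left_facts h2.
    rewrite nth_poly_ch; last lia. by apply: ea; rewrite u2.
apply: inter0 => x h1 h2.
have : (j.+1 < N \/ j.+1 = N \/ j = N \/ j = N.+1)%N by lia.
case=> [hj1|[hj1|[hj1|hj1]]].
- have [_ u1 _ _ _] := chain_facts (k:=i) (ltac:(lia)) h1.
  have [u2 _ _ _ _] := chain_facts hj1 h2.
  have := cinc (i:=i.+1) (j:=j) (ltac:(move/negbT: hji; rewrite eqE /=; lia)) (ltac:(lia)).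
  lra.
- have e : j = N.-1 by lia.
  have [_ u1 _ _ _] := chain_facts (k:=i) (ltac:(lia)) h1.
  rewrite e in h2; have [u2 _] := last_facts h2.
  have := cinc (i:=i.+1) (j:=N.-1) (ltac:(move/negbT: hji; rewrite eqE /=; lia)) (ltac:(lia)).
  lra.
- subst j; have [hv _ _] := top_facts h2.
  have [_ _ v1 _ _] := chain_facts (k:=i) (ltac:(move/negbT: hji; rewrite eqE /=; lia)) h1.
  by move: (le_trans hv v1) => /(lt_le_trans MT); rewrite ltxx.
- subst j; have [u2 _] := left_facts h2.
  have i0 : (0 < i)%N.
    case: (posnP i) => [i0'|//]; exfalso; subst i; move: hij2; rewrite eqxx /=.
    by have -> : (N.+1 == (N + 2).-1) by apply/eqP; lia.
  have : (i.+1 < N \/ i = N.-1)%N by move/negbT: hji; rewrite eqE /=; lia.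
  case=> hi.
  + have [u1 _ _ _ _] := chain_facts hi h1.
    have := cinc (i:=0) (j:=i) i0 (ltac:(lia)).
    lra.
  + rewrite hi in h1; clear hi; have [u1 _] := last_facts h1.
    have := cinc (i:=0) (j:=N.-1) (ltac:(lia)) (ltac:(lia)).
    lra.
Qed.

End Poly.

Lemma vertex_bd (ps : seq point) k : (k < size ps)%N -> pboundary ps (nth (0,0) ps k).
Proof. by move=> h; exists k => //; exact: seg_a. Qed.

Lemma cont_aff (a c : R) : continuous (fun s : R => a + s * s * c).
Proof.
move=> x.
apply: (@cvgD _ R^o); first exact: cvg_cst.
apply: (@cvgM R); last exact: cvg_cst.
apply: (@cvgM R); exact: cvg_id.
Qed.

Lemma ray_conn (a b c d : R) :
  @connected (R * R)%type ((fun s : R => (a + s * s * c, b + s * s * d)) @` setT).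
Proof.
apply: connected_continuous_connected.
  by apply/connected_intervalP => x y _ _ z _.
apply: continuous_subspaceT => x.
have h : (fun s : R => (a + s * s * c, b + s * s * d)) @ x --> (a + x * x * c, b + x * x * d).
  apply: (@cvg_pair R R R (nbhs x) (nbhs (a + x * x * c)) (nbhs (b + x * x * d)) _ _ _); [exact: cont_aff | exact: cont_aff].
exact: h.
Qed.

Lemma escape (ps : seq point) q :
  (forall x, pboundary ps x -> uu x = uu q -> vv q < vv x) -> pexterior ps q.
Proof.
move=> h.
exists ((fun s : R => (q.1 + s * s * lam, q.2 + s * s * (-1))) @` setT).
split; first by exists 0 => //; rewrite !mul0r !addr0; case: (q).
split.
  move=> y [s _ <-] /h.
  have hu : uu (q.1 + s * s * lam, q.2 + s * s * (-1)) = uu q by rewrite /uu /=; ring.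
  move=> /(_ hu); rewrite /vv /= => hlt.
  have : 0 <= s * s by nra.
  nra.
split; first exact: ray_conn.
case=> M0 hM0.
set s := `|q.2| + `|M0| + 1.
have := hM0 (q.1 + s * s * lam, q.2 + s * s * (-1)) (ex_intro2 _ _ s I erefl).
case=> _ /= hb.
have h1 : q.2 <= `|q.2| by exact: ler_norm.
have h2 : M0 <= `|M0| by exact: ler_norm.
have h3 : - (q.2 + s * s * (-1)) <= `|q.2 + s * s * (-1)| by rewrite -normrN; exact: ler_norm.
have h4 : 1 <= s by rewrite /s; have := normr_ge0 q.2; have := normr_ge0 M0; lra.
have h5 : s <= s * s by nra.
move: h1 h2 h3 h4 h5 hb; rewrite /s; set A := `|q.2|; set B := `|M0|; set C := `|_|.
nra.
Qed.

Section Comb.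
Variables (r : seq point) (eps M : R).
Local Notation m := (size r).
Local Notation rr i := (nth (0,0) r i).
Definition fcomb (k : nat) : point :=
  let p := nth (0,0) r (k %/ 3)%N in
  if (k %% 3 == 0)%N then phi (uu p - eps) M
  else if (k %% 3 == 1)%N then p else phi (uu p + eps) M.
Definition comb := mkseq fcomb (3 * m).

Lemma f0 i : fcomb (3 * i) = phi (uu (rr i) - eps) M.
Proof.
rewrite /fcomb; have -> : ((3 * i) %/ 3 = i)%N by lia.
by have -> : ((3 * i) %% 3 = 0)%N by lia.
Qed.
Lemma f1 i : fcomb (3 * i + 1) = rr i.
Proof.
rewrite /fcomb; have -> : ((3 * i + 1) %/ 3 = i)%N by lia.
by have -> : ((3 * i + 1) %% 3 = 1)%N by lia.
Qed.
Lemma f2 i : fcomb (3 * i + 2) = phi (uu (rr i) + eps) M.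
Proof.
rewrite /fcomb; have -> : ((3 * i + 2) %/ 3 = i)%N by lia.
by have -> : ((3 * i + 2) %% 3 = 2)%N by lia.
Qed.
Lemma kdec k : exists i j, (j < 3)%N /\ k = (3 * i + j)%N.
Proof. by exists (k %/ 3)%N, (k %% 3)%N; lia. Qed.

Lemma comb_size : size comb = (3 * m)%N.
Proof. exact: size_mkseq. Qed.
Lemma comb_nth k : (k < 3 * m)%N -> nth (0,0) comb k = fcomb k.
Proof. exact: nth_mkseq. Qed.

Hypothesis m1 : (0 < m)%N.
Hypothesis eps0 : 0 < eps.
Hypothesis rgap : forall i, (i.+1 < m)%N -> uu (rr i) + 3%:R * eps <= uu (rr i.+1).
Hypothesis rv : forall i, (i < m)%N -> vv (rr i) <= M.

Lemma comb_step k : (k.+1 < 3 * m)%N -> uu (fcomb k) < uu (fcomb k.+1).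
Proof.
move=> hk; have [i [j [hj ek]]] := kdec k; subst k.
case: j hj hk => [|[|[|j]]] // _ hk.
- rewrite addn0 f0; have -> : ((3 * i).+1 = 3 * i + 1)%N by lia.
  by rewrite f1 uu_phi gtrBl.
- have -> : ((3 * i + 1).+1 = 3 * i + 2)%N by lia.
  by rewrite f1 f2 uu_phi ltrDl.
- have -> : ((3 * i + 2).+1 = 3 * i.+1)%N by lia.
  rewrite f2 f0 !uu_phi.
  have := rgap (i:=i) (ltac:(lia)).
  move: eps0; lra.
Qed.

Lemma comb_inc i j : (i < j)%N -> (j < 3 * m)%N -> uu (fcomb i) < uu (fcomb j).
Proof.
elim: j => [//|j IH] hij hj.
have [e|lt] : i = j \/ (i < j)%N by lia.
  by subst; apply: comb_step.
apply: lt_trans (IH lt (ltac:(lia))) _; apply: comb_step; lia.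
Qed.

Lemma comb_v k : (k < 3 * m)%N -> vv (fcomb k) <= M.
Proof.
move=> hk; have [i [j [hj ek]]] := kdec k; subst k.
case: j hj hk => [|[|[|j]]] // _ hk.
- by rewrite addn0 f0 vv_phi.
- by rewrite f1; apply: rv; lia.
- by rewrite f2 vv_phi.
Qed.

Local Notation P := (poly_of comb (M + 1)).

Lemma comb_simple : simple_polygon P.
Proof.
apply: (@poly_simple comb M (M + 1)).
- by rewrite comb_size; lia.
- by move=> i j hij; rewrite comb_size => hj; rewrite !comb_nth; [exact: comb_inc | lia | lia].
- by move=> k; rewrite comb_size => hk; rewrite comb_nth //; exact: comb_v.
- by rewrite ltrDl.
Qed.

Lemma comb_red i : (i < m)%N -> pboundary P (rr i).
Proof.
move=> hi.
have -> : rr i = nth (0,0) P (3 * i + 1).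
  rewrite nth_poly_ch; last by rewrite comb_size; lia.
  by rewrite comb_nth ?f1 //; lia.
by apply: vertex_bd; rewrite size_poly comb_size; lia.
Qed.

Lemma comb_blue q : vv q < M ->
  (forall i, (i < m)%N -> uu q < uu (rr i) - eps \/ uu (rr i) + eps < uu q) ->
  pexterior P q.
Proof.
move=> vq hq; apply: escape => x [k hk hs] hu.
suff : M <= vv x by move: vq;  lra.
rewrite size_poly comb_size in hk.
have : (k.+1 < 3 * m \/ k = (3 * m).-1 \/ k = 3 * m \/ k = (3 * m).+1)%N by lia.
case=> [hk1|[hk1|[hk1|hk1]]].
- rewrite side_chain in hs; last by rewrite comb_size.
  rewrite !comb_nth in hs; [|lia|lia].
  have [i [j [hj ek]]] := kdec k; subst k.
  case: j hj hk hk1 hs => [|[|[|j]]] // _ hk hk1 hs.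
  + exfalso; rewrite addn0 f0 in hs; have e : ((3 * i).+1 = 3 * i + 1)%N by lia.
    rewrite e f1 in hs.
    have [h1 h2] := seg_ubnd hs (ltac:(rewrite uu_phi; move: eps0; lra)).
    rewrite uu_phi hu in h1 h2.
    have := hq i (ltac:(lia)); move: h1 h2;  lra.
  + exfalso; have e : ((3 * i + 1).+1 = 3 * i + 2)%N by lia.
    rewrite e f1 f2 in hs.
    have [h1 h2] := seg_ubnd hs (ltac:(rewrite uu_phi; move: eps0; lra)).
    rewrite uu_phi hu in h1 h2.
    have := hq i (ltac:(lia)); move: h1 h2;  lra.
  + have e : ((3 * i + 2).+1 = 3 * i.+1)%N by lia.
    rewrite e f2 f0 in hs.
    by apply: seg_vge hs _ _; rewrite vv_phi.
- rewrite hk1 -comb_size side_last ?comb_size in hs; last lia.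
  rewrite comb_nth in hs; last lia.
  have e : ((3 * m).-1 = 3 * m.-1 + 2)%N by lia.
  rewrite e f2 in hs.
  by apply: seg_vge hs _ _; rewrite vv_phi // lerDl.
- rewrite hk1 -comb_size side_top in hs.
  by apply: seg_vge hs _ _; rewrite vv_phi // lerDl.
- rewrite hk1 -comb_size side_left ?comb_size in hs; last lia.
  rewrite comb_nth in hs; last lia.
  rewrite -[0%N](muln0 3) f0 in hs.
  by apply: seg_vge hs _ _; rewrite vv_phi // lerDl.
Qed.

End Comb.
End Geo.

Lemma exists_ub (R : realType) (s : seq R) : exists M, forall x, x \in s -> x < M.
Proof.
elim: s => [|a s [M hM]]; first by exists 0.
exists (Num.max (a + 1) M) => x; rewrite inE => /orP[/eqP->|/hM h].
  by rewrite lt_max ltrDl ltr01.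
by rewrite lt_max h orbT.
Qed.

Lemma exists_lb (R : realType) (s : seq R) : (forall x, x \in s -> 0 < x) ->
  exists2 d, 0 < d & forall x, x \in s -> d <= x.
Proof.
elim: s => [|a s IH] h; first by exists 1.
have [d d0 hd] := IH (fun x hx => h x (ltac:(by rewrite inE hx orbT))).
have ha : 0 < a by apply: h; rewrite inE eqxx.
exists (Num.min a d); first by rewrite lt_min ha d0.
move=> x; rewrite inE => /orP[/eqP->|/hd hx].
  by rewrite ge_min lexx.
by rewrite ge_min hx orbT.
Qed.

Lemma lra_h1 (R : realType) (a b e dd : R) : 0 < e -> 3%:R * e = dd -> dd <= a - b -> b + e < a.
Proof. move=> h1 h2 h3; lra. Qed.
Lemma lra_h2 (R : realType) (a b e dd : R) : 0 < e -> 3%:R * e = dd -> dd <= - (a - b) -> a < b - e.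
Proof. move=> h1 h2 h3; lra. Qed.

Theorem theorem1 (R : realType) (V : seq (R * R)) (E : seq (seq (R * R))) :
  geom_hypergraph V E ->
  ((exists ps : seq (R * R), separating_cycle E ps) <-> two_colorable V E).
Proof.
move=> [uV hE]; split.
  case=> ps [_ hsep].
  exists (fun x => `[< pexterior ps x >]) => A /hsep [[a ha hai] [b hb hbe]].
  exists a, b; split => //.
  have nb : ~ pexterior ps a.
    case: hai => [hi|hbd].
    - by move=> he; apply: hi; right.
    - by case=> S [Sa [Sb _]]; exact: (Sb a Sa hbd).
  by rewrite (asboolT hbe) (asboolF nb).
case=> c hc.
have [lam hlam] := exists_ub [seq (q.1 - p.1) / (p.2 - q.2) | p <- V, q <- V].
have uinj : forall p q, p \in V -> q \in V -> uu lam p = uu lam q -> p = q.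
  move=> p q pV qV; rewrite /uu => h.
  case: (eqVneq p.2 q.2) => e.
    rewrite e in h; move/addIr: h => h1.
    by move: h1 e; case: p {pV} => p1 p2; case: q {qV} => q1 q2 /= -> ->.
  exfalso.
  have hm : (q.1 - p.1) / (p.2 - q.2) \in [seq (q.1 - p.1) / (p.2 - q.2) | p <- V, q <- V].
    by apply/allpairsP; exists (p, q).
  have e2 : q.1 - p.1 = lam * (p.2 - q.2).
    have -> : q.1 - p.1 = (q.1 + lam * q.2) - (p.1 + lam * p.2) + lam * (p.2 - q.2) by ring.
    by rewrite -h subrr add0r.
  have := hlam _ hm; rewrite e2 mulfK ?ltxx //.
  by rewrite subr_eq0.
set r := sort (fun x y => uu lam x <= uu lam y) [seq x <- V | c x].
have memr : forall x, (x \in r) = (x \in V) && c x.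
  by move=> x; rewrite mem_sort mem_filter andbC.
have ur : uniq r by rewrite sort_uniq filter_uniq.
case: (posnP (size r)) => [r0|m1].
  exists (poly_of lam [:: phi lam 0 0; phi lam 1 0] 1); split.
    apply: (@poly_simple _ _ _ 0) => //.
    - move=> i j hij /= hj; have -> : i = 0%N by lia.
      have -> : j = 1%N by lia.
      by rewrite /= !uu_phi ltr01.
    - by move=> k hk; case: k hk => [|[|]] //= _; rewrite vv_phi.
  move=> A hA; have [x [y [hx hy hxy]]] := hc A hA; exfalso.
  have [z [hz cz]] : exists z, z \in A /\ c z.
    case cx: (c x); first by exists x.
    by exists y; split => //; move: hxy; rewrite cx; case: (c y).
  have : z \in r by rewrite memr cz andbT; case: (hE A hA) => _ /(_ z hz).
  by rewrite -index_mem r0.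
have [M hM] := exists_ub [seq vv x | x <- V].
have vM : forall x, x \in V -> vv x < M by move=> x hx; apply: hM; exact: map_f.
have [d d0 hd] : exists2 d, 0 < d & forall x,
    x \in [seq `|uu lam x.1 - uu lam x.2| | x <- [seq x <- [seq (p, q) | p <- V, q <- V] | x.1 != x.2]] -> d <= x.
  apply: exists_lb => z /mapP [[p q] +] ->.
  rewrite mem_filter /= => /andP [npq /allpairsP [[p' q'] [hp hq e]]].
  move: e hp hq => /= [e1 e2] hp hq; subst.
  rewrite normr_gt0 subr_eq0; apply/negP => /eqP /(uinj _ _ hp hq) e.
  by rewrite e eqxx in npq.
have sep : forall p q, p \in V -> q \in V -> p != q -> d <= `|uu lam p - uu lam q|.
  move=> p q hp hq npq; apply: hd; apply/mapP; exists (p, q) => //.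
  by rewrite mem_filter /= npq; apply/allpairsP; exists (p, q).
have [eps eps0 epsd] : exists2 eps, 0 < eps & 3%:R * eps = d.
  exists (d / 3%:R); first by rewrite divr_gt0.
  by rewrite mulrC divfK // pnatr_eq0.
have rV : forall i, (i < size r)%N -> nth (0,0) r i \in V /\ c (nth (0,0) r i).
  by move=> i hi; have := mem_nth (0,0) hi; rewrite memr => /andP.
have rgap : forall i, (i.+1 < size r)%N ->
    uu lam (nth (0,0) r i) + 3%:R * eps <= uu lam (nth (0,0) r i.+1).
  move=> i hi.
  have hs : sorted (fun x y => uu lam x <= uu lam y) r.
    by apply: sort_sorted => x y; exact: le_total.
  have hle := (sortedP (0,0) hs) i hi.
  have [hv1 _] := rV i (ltac:(lia)).
  have [hv2 _] := rV i.+1 hi.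
  have hne : nth (0,0) r i != nth (0,0) r i.+1.
    by rewrite nth_uniq ?(ltnW hi) // eqn_leq ltnn andbF.
  have := sep _ _ hv1 hv2 hne.
  rewrite distrC ger0_norm ?subr_ge0 // => hdd.
  by rewrite epsd addrC -lerBrDr.
have rv : forall i, (i < size r)%N -> vv (nth (0,0) r i) <= M.
  by move=> i hi; apply/ltW/vM; exact: (rV i hi).1.
exists (poly_of lam (comb lam r eps M) (M + 1)); split.
  exact: comb_simple.
move=> A hA; have [x [y [hx hy hxy]]] := hc A hA.
have AV : {subset A <= V} by case: (hE A hA).
have red : forall z, z \in V -> c z ->
    (pinterior (poly_of lam (comb lam r eps M) (M + 1)) `|`
     pboundary (poly_of lam (comb lam r eps M) (M + 1))) z.
  move=> z zV cz; right; have zr : z \in r by rewrite memr zV cz.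
  rewrite -(nth_index (0,0) zr); apply: comb_red => //; by rewrite index_mem.
have blue : forall z, z \in V -> c z = false ->
    pexterior (poly_of lam (comb lam r eps M) (M + 1)) z.
  move=> z zV cz; apply: comb_blue => //; first exact: vM.
  move=> i hi; have [hv hc'] := rV i hi.
  have hne : z != nth (0,0) r i by apply/eqP => e; rewrite e hc' in cz.
  have := sep _ _ zV hv hne; rewrite ler_normr => /orP [h|h].
    by right; exact: lra_h1 eps0 epsd h.
  by left; exact: lra_h2 eps0 epsd h.
case cx: (c x).
  have cy : c y = false by move: hxy; rewrite cx; case: (c y).
  split; [exists x => //; exact: red (AV x hx) cx | exists y => //; exact: blue (AV y hy) cy].
have cy : c y by move: hxy; rewrite cx; case: (c y).
split; [exists y => //; exact: red (AV y hy) cy | exists x => //; exact: blue (AV x hx) cx].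
Qed.
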